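(* For every $0<r<1$ there is an open set $U\subseteq2^\omega$ which is dualistic and satisfies $\mu(U)=\mu(\operatorname{Cl}U)=r$; moreover $\operatorname{Cl}U$ is also dualistic.
   Context: $2^{\omega}$ is the Cantor space; $N_s=\{x\in2^\omega:s\subset x\}$; $\mu$ is the coin-tossing measure, $\mu(N_s)=2^{-\mathrm{lh}(s)}$. For measurable $A$, $\mathcal{D}_A(z)=\lim_n\mu(A\cap N_{z\restriction n})/\mu(N_{z\restriction n})$ when the limit exists. $A$ is dualistic if for every $z\in2^\omega$ the limit $\mathcal{D}_A(z)$ exists and belongs to $\{0,1\}$. *)

(* Defs.v *)
From HB Require Import structures.
From mathcomp Require Import all_boot all_order all_algebra.
From mathcomp Require Import all_classical all_reals all_analysis.
Set Implicit Arguments. Unset Strict Implicit. Unset Printing Implicit Defensive.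
Import Order.TTheory GRing.Theory Num.Theory.
Local Open Scope classical_set_scope.
Local Open Scope ring_scope.

Definition cyl (s : seq bool) : set cantor_space :=
  [set x | forall i, (i < size s)%N -> x i = nth false s i].

Definition prefix (z : cantor_space) (n : nat) : seq bool := mkseq z n.

(* On Borel sets (in particular open and closed ones) this is the
   coin-tossing measure with mu(N_s) = 2^-lh(s). *)
Definition mu (R : realType) (A : set cantor_space) : \bar R :=
  ereal_inf [set (\sum_(0 <= n <oo) ((2%:R : R) ^- size (c n))%:E)%E
            | c in [set c : nat -> seq bool | A `<=` \bigcup_n cyl (c n)]].

(* mu(A ∩ N_{z|n}) / mu(N_{z|n}) = mu(A ∩ N_{z|n}) * 2^n converges to l *)
Definition density_is (R : realType) (A : set cantor_space)
    (z : cantor_space) (l : R) : Prop :=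
  ((fun n : nat => (mu R (A `&` cyl (prefix z n)) * ((2%:R : R) ^+ n)%:E)%E)
     @ \oo --> l%:E).

Definition dualistic (R : realType) (A : set cantor_space) : Prop :=
  forall z : cantor_space, exists l : R, (l = 0 \/ l = 1) /\ density_is A z l.

(* Main.v *)
Require Import Defs.
From HB Require Import structures.
From mathcomp Require Import all_boot all_order all_algebra.
From mathcomp Require Import all_classical all_reals all_analysis.
From mathcomp Require Import lra ring zify.
Import Order.TTheory GRing.Theory Num.Theory.
Local Open Scope classical_set_scope.
Local Open Scope ring_scope.

Definition ccons (b : bool) (x : cantor_space) : cantor_space :=
  fun n => if n is n'.+1 then x n' else b.
Definition zeros : cantor_space := fun _ => false.

Fixpoint Fm (R : realType) (k : nat) (A : set cantor_space) : R :=
  match k with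
  | 0 => if `[< A zeros >] then 1 else 0
  | k'.+1 => (Fm R k' (ccons false @^-1` A) + Fm R k' (ccons true @^-1` A)) / 2
  end.

Lemma Fm_ge0 (R : realType) k A : 0 <= Fm R k A.
Proof.
elim: k A => [|k IH] A /=; first by case: ifP.
by apply: divr_ge0 => //; apply: addr_ge0.
Qed.

Lemma Fm_le (R : realType) k (A B : set cantor_space) : A `<=` B -> Fm R k A <= Fm R k B.
Proof.
elim: k A B => [|k IH] A B AB /=.
  case: (pselect (A zeros)) => HA; first by rewrite asboolT // asboolT //; exact: AB.
  by rewrite (asboolF HA); case: ifP.
apply: ler_pM => //; first by apply: addr_ge0; apply: Fm_ge0.
by apply: lerD; apply: IH; apply: preimage_subset.
Qed.

Lemma Fm_UI (R : realType) k (A B : set cantor_space) :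
  Fm R k (A `|` B) + Fm R k (A `&` B) = Fm R k A + Fm R k B.
Proof.
elim: k A B => [|k IH] A B /=.
  case: (pselect (A zeros)) => HA; case: (pselect (B zeros)) => HB.
  - by rewrite (asboolT (or_introl HA)) (asboolT (conj HA HB)) (asboolT HA) (asboolT HB).
  - by rewrite (asboolT (or_introl HA)) (asboolT HA) (asboolF HB) (asboolF (fun H : A zeros /\ B zeros => HB H.2)) addr0.
  - by rewrite (asboolT (or_intror HB)) (asboolF HA) (asboolT HB) (asboolF (fun H : A zeros /\ B zeros => HA H.1)) addr0 add0r.
  - by rewrite (asboolF HA) (asboolF HB) (asboolF (fun H : A zeros /\ B zeros => HA H.1)) (asboolF (fun H : A zeros \/ B zeros => match H with or_introl h => HA h | or_intror h => HB h end)).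
rewrite !preimage_setU !preimage_setI.
have H1 := IH (ccons false @^-1` A) (ccons false @^-1` B).
have H2 := IH (ccons true @^-1` A) (ccons true @^-1` B).
rewrite -mulrDl -mulrDl; congr (_ / _).
by rewrite addrACA H1 H2 addrACA.
Qed.

Lemma Fm0 (R : realType) k : Fm R k set0 = 0.
Proof.
elim: k => [|k IH] /=; first by rewrite asboolF.
by rewrite !preimage_set0 IH addr0 mul0r.
Qed.

Lemma Fm_sub (R : realType) k (A B : set cantor_space) :
  Fm R k (A `|` B) <= Fm R k A + Fm R k B.
Proof. by rewrite -Fm_UI lerDl Fm_ge0. Qed.

Lemma Fm_disj (R : realType) k (A B : set cantor_space) : A `&` B = set0 ->
  Fm R k (A `|` B) = Fm R k A + Fm R k B.
Proof. by move=> AB; rewrite -Fm_UI AB Fm0 addr0. Qed.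

Lemma cyl_nil : cyl [::] = setT.
Proof. by apply/seteqP; split=> // x _ i. Qed.

Lemma ccons_cyl (b b' : bool) s :
  ccons b' @^-1` cyl (b :: s) = if b == b' then cyl s else set0.
Proof.
apply/seteqP; split=> x /=.
  move=> H; have H0 : b' = b := H 0%N isT.
  case: eqP => [_|ne]; last by apply: ne.
  by move=> i ilt; have := H i.+1 ilt.
case: eqP => [<-|//] H [|i] //= ilt; exact: H.
Qed.

Lemma Fm_cyl (R : realType) k s : (size s <= k)%N ->
  Fm R k (cyl s) = (2%:R : R) ^- size s.
Proof.
elim: k s => [|k IH] [|b s] //=.
- by rewrite cyl_nil asboolT // expr0 invr1.
- move=> _; rewrite cyl_nil !preimage_setT -cyl_nil !IH //= expr0 invr1.
  by rewrite -mulr2n -mulr_natr mul1r divff.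
- rewrite ltnS => sk; rewrite !ccons_cyl; case: b => /=.
    rewrite Fm0 IH // add0r exprS invfM mulrC; done.
  rewrite Fm0 IH // addr0 exprS invfM mulrC; done.
Qed.

Lemma cyl_open_closed (s : seq bool) : open (cyl s) /\ closed (cyl s).
Proof.
suff H : forall k, open [set x : cantor_space | forall i, (i < k)%N -> x i = nth false s i] /\
   closed [set x : cantor_space | forall i, (i < k)%N -> x i = nth false s i] by exact: H.
elim=> [|k [IHo IHc]].
  have -> : [set x : cantor_space | forall i, (i < 0)%N -> x i = nth false s i] = setT.
    by apply/seteqP; split=> // x _ i.
  by split; [exact: openT | exact: closedT].
have -> : [set x : cantor_space | forall i, (i < k.+1)%N -> x i = nth false s i] =
  [set x : cantor_space | forall i, (i < k)%N -> x i = nth false s i] `&`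
  (@proj nat (fun _ => bool) k) @^-1` [set nth false s k].
  apply/seteqP; split=> x /=.
    by move=> H; split=> [i ik|]; apply: H; rewrite ?ltnS ?leqnn // ltnW.
  by move=> [H1 H2] i; rewrite ltnS leq_eqVlt => /orP[/eqP->|/H1] //.
split.
  apply: openI => //; apply: open_comp; last exact: discrete_open.
  by move=> x _; apply: proj_continuous.
apply: closedI => //. 
by have := (@continuous_closedP cantor_space bool (@proj nat (fun _ => bool) k)).1 (@proj_continuous nat (fun _ => bool) k); apply; exact: discrete_closed.
Qed.

Definition ocyl (o : option (seq bool)) : set cantor_space :=
  if o is Some s then cyl s else set0.
Definition wt (R : realType) (o : option (seq bool)) : R :=
  if o is Some s then (2%:R : R) ^- size s else 0.
Definition osize (o : option (seq bool)) : nat :=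
  if o is Some s then size s else 0.
Definition FU (N : nat) (f : nat -> option (seq bool)) : set cantor_space :=
  [set x | exists2 n, (n < N)%N & ocyl (f n) x].

Lemma FUS N f : FU N.+1 f = FU N f `|` ocyl (f N).
Proof.
apply/seteqP; split=> x /=.
  move=> [n]; rewrite ltnS leq_eqVlt => /orP[/eqP->|nN] H; first by right.
  by left; exists n.
by move=> [[n nN H]|H]; [exists n => //; rewrite ltnW | exists N].
Qed.

Lemma FU0 f : FU 0 f = set0.
Proof. by apply/seteqP; split=> x // [n]. Qed.

Lemma Fm_ocyl (R : realType) k o : (osize o <= k)%N -> Fm R k (ocyl o) = wt R o.
Proof. by case: o => [s|] /= H; [rewrite Fm_cyl | rewrite Fm0]. Qed.

Lemma Fm_FU_le (R : realType) k N f : (forall n, (n < N)%N -> (osize (f n) <= k)%N) ->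
  Fm R k (FU N f) <= \sum_(n < N) wt R (f n).
Proof.
elim: N => [|N IH] H; first by rewrite FU0 Fm0 big_ord0.
rewrite FUS big_ord_recr /=; apply: le_trans (Fm_sub _ _ _ _) _.
apply: lerD; first by apply: IH => n nN; apply: H; rewrite ltnW.
by rewrite Fm_ocyl // H.
Qed.

Lemma Fm_FU_eq (R : realType) k N f : (forall n, (n < N)%N -> (osize (f n) <= k)%N) ->
  (forall i j, (i < j)%N -> (j < N)%N -> ocyl (f i) `&` ocyl (f j) = set0) ->
  Fm R k (FU N f) = \sum_(n < N) wt R (f n).
Proof.
elim: N => [|N IH] H D; first by rewrite FU0 Fm0 big_ord0.
rewrite FUS big_ord_recr /= Fm_disj.
  rewrite IH ?Fm_ocyl ?H //; first by move=> n nN; apply: H; rewrite ltnW.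
  by move=> i j ij jN; apply: D; rewrite // ltnW.
apply/seteqP; split=> x // [[n nN H1] H2].
by rewrite -(D n N nN (ltnSn N)); split.
Qed.

Lemma FU_closed N f : closed (FU N f).
Proof.
elim: N => [|N IH]; first by rewrite FU0; exact: closed0.
rewrite FUS; apply: closedU => //; case: (f N) => [s|] /=; last exact: closed0.
exact: (cyl_open_closed s).2.
Qed.

Lemma mu_ge0 (R : realType) A : (0 <= mu R A)%E.
Proof.
apply: le_ereal_inf_tmp => _ [c _ <-].
by apply: nneseries_ge0 => n _ _; rewrite lee_fin invr_ge0 exprn_ge0.
Qed.

Lemma mu_mono (R : realType) (A B : set cantor_space) : A `<=` B -> (mu R A <= mu R B)%E.
Proof.
move=> AB; apply: ereal_inf_le_tmp => _ [c Hc <-]; exists c => //.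
exact: subset_trans Hc.
Qed.

Lemma cyl_prefix (z : cantor_space) n : cyl (Defs.prefix z n) z.
Proof. by move=> i; rewrite size_mkseq => ilt; rewrite nth_mkseq. Qed.

Lemma mu_LB (R : realType) A N f :
  (forall i j, (i < j)%N -> (j < N)%N -> ocyl (f i) `&` ocyl (f j) = set0) ->
  FU N f `<=` A -> ((\sum_(n < N) wt R (f n))%:E <= mu R A)%E.
Proof.
move=> D FA; apply: le_ereal_inf_tmp => _ [c Hc <-].
have cpt : compact (FU N f).
  apply: (@subclosed_compact _ _ [set: cantor_space]) => //.
    exact: FU_closed.
  exact: cantor_space_compact.
rewrite compact_cover in cpt.
have op : forall i, setT i -> open (cyl (c i)).
  by move=> i _; exact: (cyl_open_closed _).1.
have cv : FU N f `<=` cover setT (fun i => cyl (c i)).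
  by move=> x /FA /Hc.
have [D' _ HD'] := cpt nat setT (fun n => cyl (c n)) op cv.
set N' := (\max_(i <- finmap.enum_fset D') i)%N.+1.
have sub : FU N f `<=` FU N' (fun n => Some (c n)).
  move=> x /HD' [i iD' ci]; exists i => //.
  rewrite /N' ltnS; apply: (@leq_bigmax_seq nat _ xpredT (fun i => i)) => //.
set k := maxn (\max_(n < N) osize (f n))%N (\max_(n < N') osize (Some (c n)))%N.
have e1 : Fm R k (FU N f) = \sum_(n < N) wt R (f n).
  apply: Fm_FU_eq => // n nN.
  exact: leq_trans (@leq_bigmax _ (fun n : 'I_N => osize (f n)) (Ordinal nN)) (leq_maxl _ _).
have e2 : Fm R k (FU N' (fun n => Some (c n))) <= \sum_(n < N') wt R (Some (c n)).
  apply: Fm_FU_le => n nN.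
  exact: leq_trans (@leq_bigmax _ (fun n : 'I_N' => osize (Some (c n))) (Ordinal nN)) (leq_maxr _ _).
have e3 := Fm_le R k _ _ sub.
apply: (@le_trans _ _ (\sum_(0 <= i < N') ((2%:R:R) ^- size (c i))%:E)%E); last first.
  by apply: nneseries_lim_ge => n _ _; rewrite lee_fin invr_ge0 exprn_ge0.
rewrite sumEFin lee_fin big_mkord -e1.
exact: le_trans e3 e2.
Qed.

Lemma pow_small (R : realType) (e : R) : 0 < e -> exists M : nat, (2%:R : R) ^- M < e.
Proof.
move=> e0; set n := Num.Def.archi_bound (e^-1).
have h1 : e^-1 < n%:R by apply: archi_boundP; rewrite invr_ge0 ltW.
have h2 : (n < 2 ^ n)%N by apply: ltn_expl.
exists n; rewrite -(invrK e) ltf_pV2 ?posrE ?exprn_gt0 ?invr_gt0 //.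
apply: lt_trans h1 _; rewrite -natrX ltr_nat //.
Qed.

Lemma geo_sum (R : realType) M K :
  \sum_(n < K) (2%:R : R) ^- (n + M).+1 = (2%:R : R) ^- M - (2%:R : R) ^- (K + M).
Proof.
elim: K => [|K IH]; first by rewrite big_ord0 add0n subrr.
rewrite big_ord_recr /= IH addSn -addrA; congr (_ + _).
rewrite exprS invfM; set a := (2%:R ^+ (K + M))^-1.
lra.
Qed.

Lemma mu_UB (R : realType) A (p : cantor_space) (g : nat -> option (seq bool)) (x : R) :
  A `<=` [set p] `|` \bigcup_n ocyl (g n) ->
  (forall N, \sum_(n < N) wt R (g n) <= x) -> (mu R A <= x%:E)%E.
Proof.
move=> HA Hx; apply/lee_addgt0Pr => e e0.
have [M hM] : exists M : nat, (2%:R : R) ^- M < e / 2.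
  by apply: pow_small; rewrite divr_gt0.
have x0 : 0 <= x by have := Hx 0%N; rewrite big_ord0.
pose d n := if n is n'.+1 then (if g n' is Some s then s else nseq (n' + M).+1 false)
            else Defs.prefix p M.
apply: ereal_inf_le.
exists (\sum_(0 <= n <oo) ((2%:R : R) ^- size (d n))%:E)%E.
  exists d => //.
  move=> y /HA [->|[n _ Hn]]; first by exists 0%N => //; exact: cyl_prefix.
  by exists n.+1 => //=; move: Hn; rewrite /d; case: (g n).
apply: lime_le.
  by apply: is_cvg_nneseries => n _ _; rewrite lee_fin invr_ge0 exprn_ge0.
apply: nearW => K; rewrite sumEFin lee_fin.
case: K => [|K]; first by rewrite big_geq // addr_ge0 // ltW.
rewrite big_nat_recl //= size_mkseq.
have H1 : \sum_(0 <= i < K) (2%:R : R) ^- size (d i.+1) <=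
          \sum_(i < K) (wt R (g i) + (2%:R : R) ^- (i + M).+1).
  rewrite big_mkord; apply: ler_sum => i _ /=.
  case: (g i) => [s|] /=; first by rewrite lerDl invr_ge0 exprn_ge0.
  by rewrite add0r size_nseq.
rewrite big_split /= geo_sum in H1.
have H2 := Hx K.
have H3 : 0 <= (2%:R : R) ^- (K + M) by rewrite invr_ge0 exprn_ge0.
lra.
Qed.

Lemma mu_cyl (R : realType) s : mu R (cyl s) = ((2%:R : R) ^- size s)%:E.
Proof.
apply/le_anti/andP; split.
  apply: (@mu_UB R _ zeros (fun n => if n is 0%N then Some s else None)).
    by move=> y ys; right; exists 0%N.
  case=> [|N]; first by rewrite big_ord0 invr_ge0 exprn_ge0.
  by rewrite big_ord_recl /= big1 ?addr0.
have := @mu_LB R (cyl s) 1 (fun _ => Some s).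
rewrite big_ord1; apply.
  by move=> i j ij; rewrite ltnS leqn0 => /eqP jE; rewrite jE in ij.
by move=> y [n _].
Qed.

Lemma mu_set0 (R : realType) : mu R set0 = 0%E.
Proof.
apply/le_anti/andP; split; last exact: mu_ge0.
apply: (@mu_UB R _ zeros (fun _ => None)) => // N.
by rewrite big1.
Qed.

Set Implicit Arguments. Unset Strict Implicit.

Fixpoint rho (R : realType) (r : R) (j : nat) : R :=
  match j with
  | 0 => r
  | j'.+1 => if 1 <= 2 * rho r j' then 2 * rho r j' - 1 else 2 * rho r j'
  end.

Definition dig (R : realType) (r : R) (j : nat) : bool := 1 <= 2 * rho r j.

Definition Sd (R : realType) (r : R) (N : nat) : R :=
  \sum_(j < N) (if dig r j then (2%:R : R) ^- j.+1 else 0).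

Lemma rho_range (R : realType) (r : R) j : 0 <= r < 1 -> 0 <= rho r j < 1.
Proof.
move=> /andP[r0 r1]; elim: j => [|j /andP[h0 h1]] /=; first by rewrite r0 r1.
case: ifP => H; apply/andP; split; lra.
Qed.

Lemma rho_sum (R : realType) (r : R) N :
  r = Sd r N + rho r N * (2%:R : R) ^- N.
Proof.
elim: N => [|N IH]; first by rewrite /Sd big_ord0 expr0 invr1 mulr1 add0r.
rewrite /Sd big_ord_recr /= -/(Sd r N) /dig exprS invfM.
set a := ((2%:R : R) ^+ N)^-1.
by case: ifP => _; rewrite {1}IH -/a; field.
Qed.

Lemma Sd_bounds (R : realType) (r : R) N : 0 <= r < 1 ->
  Sd r N <= r /\ r - (2%:R : R) ^- N < Sd r N.
Proof.
move=> rr; have /andP[h0 h1] := rho_range N rr.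
have hp : 0 < (2%:R : R) ^- N by rewrite invr_gt0 exprn_gt0.
have E := rho_sum r N.
have H1 : 0 <= rho r N * 2%:R ^- N by rewrite mulr_ge0 // ltW.
have H2 : rho r N * 2%:R ^- N < 2%:R ^- N.
  by rewrite -{2}(mul1r (2%:R ^- N)) ltr_pM2r.
split; lra.
Qed.

Lemma dig_false_exists (R : realType) (r : R) : 0 <= r < 1 -> exists L, dig r L = false.
Proof.
move=> rr; apply/not_existsP => H.
have allt : forall j, dig r j = true by move=> j; case E: (dig r j) => //; exfalso; exact: (H j).
have [M hM] := @pow_small R (1 - r) ltac:(move/andP: rr => [_ r1]; lra).
have := (Sd_bounds M rr).1.
rewrite /Sd (eq_bigr (fun j : 'I_M => (2%:R : R) ^- (j + 0).+1)); last first.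
  by move=> j _; rewrite allt addn0.
rewrite geo_sum addn0 expr0 invr1; lra.
Qed.

Lemma pow_ineq (R : realType) L n : (L <= n)%N ->
  (2%:R : R) ^- (L + 1 + (n - L).*2) * 2%:R ^+ n <= 2%:R ^+ L * (2%:R^-1) ^+ n.
Proof.
move=> Ln; rewrite exprVn.
have -> : n = (L + (n - L))%N by rewrite subnKC.
rewrite addKn; set a := (n - L)%N.
rewrite -addnn !exprD expr1.
set X := (2%:R : R) ^+ L; set Y := (2%:R : R) ^+ a.
have X0 : X != 0 by rewrite expf_neq0 // pnatr_eq0.
have Y0 : Y != 0 by rewrite expf_neq0 // pnatr_eq0.
have Yp : 0 < Y by rewrite exprn_gt0.
clearbody X Y.
have -> : (X * 2%:R * (Y * Y))^-1 * (X * Y) = (2%:R * Y)^-1.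
  by field; rewrite X0 Y0.
have -> : X * (X * Y)^-1 = Y^-1 by field; rewrite X0 Y0.
rewrite invfM ler_piMl ?invr_ge0 ?ltW //; lra.
Qed.


Local Close Scope ring_scope.


Definition cc (e : nat -> bool) (L j : nat) : seq bool :=
  if (j < L)%N then rcons (mkseq e j) false
  else mkseq e L ++ nseq ((j - L - 1) %/ 2) false ++
       true :: ((j - L - 1) %% 2 == 0)%N :: nseq ((j - L - 1) %/ 2 + (j - L - 1) %% 2) false.

Definition pp (e : nat -> bool) (L : nat) : cantor_space :=
  fun n => if (n < L)%N then e n else false.

Section cc.
Variables (e : nat -> bool) (L : nat).

Lemma size_cc j : j != L -> size (cc e L j) = j.+1.
Proof.
rewrite /cc; case: ltnP => jL jneq; first by rewrite size_rcons size_mkseq.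
rewrite size_cat size_mkseq size_cat size_nseq /= size_nseq.
have := divn_eq (j - L - 1) 2; lia.
Qed.

Lemma cc_lt j m : (j < L)%N ->
  nth false (cc e L j) m = if (m < j)%N then e m else false.
Proof.
move=> jL; rewrite /cc jL nth_rcons size_mkseq.
case: ltnP => mj; first by rewrite nth_mkseq.
by case: eqP.
Qed.

Lemma cc_gt j m : (L <= j)%N ->
  nth false (cc e L j) m =
  if (m < L)%N then e m
  else if (m < L + (j - L - 1) %/ 2)%N then false
  else if m == L + (j - L - 1) %/ 2 then true
  else if m == (L + (j - L - 1) %/ 2).+1 then ((j - L - 1) %% 2 == 0)%N
  else false.
Proof.
move=> Lj; rewrite /cc ltnNge Lj /= nth_cat size_mkseq.
case: ltnP => mL; first by rewrite nth_mkseq.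
rewrite nth_cat size_nseq nth_nseq.
set q := ((j - L - 1) %/ 2)%N.
case: ltnP => m1; first by rewrite ifT //; lia.
rewrite ifF; last by apply/negbTE; lia.
case: (m =P L + q) => m2.
  by have -> : (m - L - q = 0)%N by lia.
case: (m =P (L + q).+1) => m3.
  by have -> : (m - L - q = 1)%N by lia.
set k := (m - L - q)%N.
have : (2 <= k)%N by rewrite /k; lia.
case: k => [|[|k]] //= _.
by rewrite nth_nseq; case: ifP.
Qed.


Let q j := ((j - L - 1) %/ 2)%N.

Lemma cc_head j : (L < j)%N -> nth false (cc e L j) (L + q j) = true.
Proof.
move=> Lj; rewrite cc_gt ?(ltnW Lj) // -/(q j) ifF; last by apply/negbTE; lia.
by rewrite ifF ?eqxx //; apply/negbTE; lia.
Qed.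

Lemma cc_next j : (L < j)%N -> nth false (cc e L j) (L + q j).+1 = ((j - L - 1) %% 2 == 0)%N.
Proof.
move=> Lj; rewrite cc_gt ?(ltnW Lj) // -/(q j) ifF; last by apply/negbTE; lia.
rewrite ifF; last by apply/negbTE; lia.
by rewrite ifF ?eqxx //; apply/negbTE; lia.
Qed.

Lemma cc_zero j m : (L < j)%N -> (L <= m)%N -> (m < L + q j)%N -> nth false (cc e L j) m = false.
Proof.
move=> Lj Lm mq; rewrite cc_gt ?(ltnW Lj) // -/(q j) ifF; last by apply/negbTE; lia.
by rewrite ifT.
Qed.

Lemma cc_low j m : (m < L)%N -> (m < j)%N -> nth false (cc e L j) m = e m.
Proof.
move=> mL mj; case: (ltnP j L) => jL; first by rewrite cc_lt // mj.
by rewrite cc_gt // mL.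
Qed.

Lemma cc_last j : (j < L)%N -> nth false (cc e L j) j = false.
Proof. by move=> jL; rewrite cc_lt // ltnn. Qed.

End cc.

Lemma cyl_sep s t m : (m < size s)%N -> (m < size t)%N ->
  nth false s m != nth false t m -> cyl s `&` cyl t = set0.
Proof.
move=> ms mt ne; apply/seteqP; split=> x // [hs ht].
by move: ne; rewrite -(hs m ms) -(ht m mt) eqxx.
Qed.

Section cc2.
Variables (e : nat -> bool) (L : nat).
Hypothesis eL : e L = false.

Lemma cc_disj i j : (i < j)%N -> e i -> e j ->
  cyl (cc e L i) `&` cyl (cc e L j) = set0.
Proof.
move=> ij ei ej.
have iL : i != L by apply/eqP => iL; rewrite iL eL in ei.
have jL : j != L by apply/eqP => jL; rewrite jL eL in ej.
have si := @size_cc e L i iL; have sj := @size_cc e L j jL.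
case: (ltnP j L) => jL'.
  apply: (@cyl_sep _ _ i); rewrite ?si ?sj; try lia.
  by rewrite cc_last ?cc_low // ?ei //; lia.
have Lj : (L < j)%N by lia.
case: (ltnP i L) => iL'.
  apply: (@cyl_sep _ _ i); rewrite ?si ?sj; try lia.
  by rewrite cc_last // cc_low // ei.
have Li : (L < i)%N by lia.
case: (ltnP ((i - L - 1) %/ 2) ((j - L - 1) %/ 2)) => qq.
  apply: (@cyl_sep _ _ (L + (i - L - 1) %/ 2)); rewrite ?si ?sj; try lia.
  by rewrite cc_head // cc_zero //; lia.
apply: (@cyl_sep _ _ (L + (i - L - 1) %/ 2).+1); rewrite ?si ?sj; try lia.
have -> : (L + (i - L - 1) %/ 2 = L + (j - L - 1) %/ 2)%N by lia.
rewrite cc_next // .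
have -> : (L + (j - L - 1) %/ 2 = L + (i - L - 1) %/ 2)%N by lia.
rewrite cc_next //.
have h1 := ltn_pmod (i - L - 1) (isT : (0 < 2)%N).
have h2 := ltn_pmod (j - L - 1) (isT : (0 < 2)%N).
have h3 : ((i - L - 1) %% 2 != (j - L - 1) %% 2)%N by lia.
move: h1 h2 h3; case: ((i - L - 1) %% 2)%N => [|[|]] //; case: ((j - L - 1) %% 2)%N => [|[|]] //.
Qed.

Lemma pp_notin j : e j -> ~ cyl (cc e L j) (pp e L).
Proof.
move=> ej.
have jL : j != L by apply/eqP => jL; rewrite jL eL in ej.
have sj := @size_cc e L j jL.
case: (ltnP j L) => jL' H.
  by have := H j; rewrite sj cc_last // /pp jL' ej => /(_ (ltnSn j)).
have Lj : (L < j)%N by lia.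
have := H (L + (j - L - 1) %/ 2)%N; rewrite sj cc_head // /pp ifF; last by apply/negbTE; lia.
by move=> /(_ ltac:(lia)).
Qed.

Lemma far (x : cantor_space) : x <> pp e L ->
  exists m, x m != pp e L m /\ forall j, (m.*2 + L + 3 <= j)%N ->
     (m < size (cc e L j))%N /\ nth false (cc e L j) m != x m.
Proof.
move=> xp.
have [m xm] : exists m, x m != pp e L m.
  apply/not_existsP => H; apply: xp; apply/funext => m.
  by apply/eqP/negP => /negP; have := H m.
exists m; split => // j jm.
have jL : j != L by apply/eqP; lia.
have Lj : (L < j)%N by lia.
rewrite size_cc //; split; first by lia.
case: (ltnP m L) => mL.
  by rewrite cc_low //; [move: xm; rewrite /pp mL eq_sym | lia].
rewrite cc_zero //; last by lia.
by move: xm; rewrite /pp ltnNge mL /=; case: (x m).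
Qed.

Lemma near_p n j : (L <= n)%N -> e j -> (j < L + 1 + (n - L).*2)%N ->
  cyl (cc e L j) `&` cyl (Defs.prefix (pp e L) n) = set0.
Proof.
move=> Ln ej jn.
have jL : j != L by apply/eqP => jL; rewrite jL eL in ej.
have sj := @size_cc e L j jL.
case: (ltnP j L) => jL'.
  apply: (@cyl_sep _ _ j); rewrite ?sj ?size_mkseq; try lia.
  by rewrite cc_last // nth_mkseq /pp ?jL' ?ej //; lia.
have Lj : (L < j)%N by lia.
apply: (@cyl_sep _ _ (L + (j - L - 1) %/ 2)); rewrite ?sj ?size_mkseq; try lia.
rewrite cc_head // nth_mkseq /pp; last by lia.
by rewrite ifF //; apply/negbTE; lia.
Qed.

End cc2.

Local Open Scope ring_scope.
Set Implicit Arguments. Unset Strict Implicit.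

Lemma in_prefix (x y : cantor_space) k i : cyl (Defs.prefix x k) y -> (i < k)%N -> y i = x i.
Proof. by move=> H ik; have := H i; rewrite size_mkseq nth_mkseq // => ->. Qed.

Lemma prefix_sub (x : cantor_space) s k : cyl s x -> (size s <= k)%N ->
  cyl (Defs.prefix x k) `<=` cyl s.
Proof.
move=> xs sk y yk i isz; rewrite (in_prefix yk); first exact: xs.
exact: leq_trans isz sk.
Qed.

Lemma dens_one (R : realType) (A : set cantor_space) z s :
  cyl s z -> cyl s `<=` A -> density_is (R:=R) A z 1.
Proof.
move=> zs sA; apply: cvg_near_cst; exists (size s) => // n /= sn.
have -> : A `&` cyl (Defs.prefix z n) = cyl (Defs.prefix z n).
  apply/seteqP; split=> y; first by case.
  by move=> yp; split => //; apply: sA; exact: (prefix_sub zs sn).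
by rewrite mu_cyl size_mkseq -EFinM mulVf // expf_neq0 // pnatr_eq0.
Qed.

Lemma dens_zero (R : realType) (A : set cantor_space) z n0 :
  (forall k, (n0 <= k)%N -> A `&` cyl (Defs.prefix z k) = set0) -> density_is (R:=R) A z 0.
Proof.
move=> H; apply: cvg_near_cst; exists n0 => // n /= sn.
by rewrite H // mu_set0 mul0e.
Qed.

Unset Implicit Arguments.

Theorem proposition3p9 (R : realType) (r : R) :
  0 < r -> r < 1 ->
  exists U : set cantor_space,
    [/\ open U, dualistic R U, mu R U = r%:E, mu R (closure U) = r%:E
      & dualistic R (closure U)].
Proof.
move=> r0 r1.
have rr : 0 <= r < 1 by rewrite ltW.
have [L eL] := dig_false_exists rr.
set e := dig r in eL *.
set c := cc e L; set p := pp e L.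
set U := \bigcup_(j in [set j | e j]) cyl (c j).
have Uop : open U by apply: bigcup_open => j _; exact: (cyl_open_closed _).1.
have sep : forall x, ~ U x -> x <> p -> exists n0, forall k, (n0 <= k)%N ->
    cyl (Defs.prefix x k) `&` (U `|` [set p]) = set0.
  move=> x xU xp; have [m [xm Hm]] := @far e L eL x xp.
  exists (m.*2 + L + 3)%N => k nk; apply/seteqP; split => y // [yk [[j ej yj]|yp]].
  - case: (leqP (m.*2 + L + 3) j) => jn.
      have [ms ne] := Hm j jn.
      by move: ne; rewrite -(yj m ms) (in_prefix yk) ?eqxx //; lia.
    apply: xU; exists j => //.
    have jL : j != L by apply/eqP => jL; rewrite /= jL eL in ej.
    move=> i; rewrite size_cc // => ij; rewrite -(yj i); last by rewrite size_cc.
    by rewrite (in_prefix yk) //; lia.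
  - rewrite yp in yk; move: xm; rewrite -(in_prefix yk (i:=m)) ?eqxx //; lia.
have clU : closure U `<=` U `|` [set p].
  move=> x clx; case: (pselect (U x)) => [Ux|nUx]; first by left.
  case: (pselect (x = p)) => [->|xp]; first by right.
  exfalso; have [n0 H] := sep x nUx xp.
  have nb : nbhs x (cyl (Defs.prefix x n0)).
    by apply: open_nbhs_nbhs; split; [exact: (cyl_open_closed _).1 | exact: cyl_prefix].
  have [y [Uy yp]] := clx _ nb.
  have : (cyl (Defs.prefix x n0) `&` (U `|` [set p])) y by split => //; left.
  by rewrite H.
have UclU : U `<=` closure U by exact: subset_closure.
set f := fun j => if e j then Some (c j) else None.
have sumf : forall N, \sum_(j < N) wt R (f j) = Sd r N.
  move=> N; apply: eq_bigr => j _; rewrite /f -/e; case ej: (e j) => //=.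
  have jL : (j : nat) != L by apply/eqP => jL; rewrite jL eL in ej.
  by rewrite size_cc.
have LB : forall N, ((Sd r N)%:E <= mu R U)%E.
  move=> N; rewrite -sumf; apply: mu_LB.
    move=> i j ij jN; rewrite /f; case ei: (e i); case ej: (e j) => /=;
      rewrite ?set0I ?setI0 //; exact: cc_disj.
  by move=> y [j _]; rewrite /f; case ej: (e j) => //= yj; exists j.
have UB : (mu R (closure U) <= r%:E)%E.
  apply: (@mu_UB R _ p f r).
    move=> y /clU [[j ej yj]|->]; last by left.
    by right; exists j => //; rewrite /f ej.
  by move=> N; rewrite sumf; exact: (Sd_bounds N rr).1.
have muU : mu R U = r%:E.
  apply/le_anti/andP; split; first exact: le_trans (mu_mono R _ _ UclU) UB.
  apply/lee_addgt0Pr => eps eps0.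
  have [N hN] := pow_small R eps eps0.
  have h := (Sd_bounds N rr).2.
  apply: (@le_trans _ _ ((Sd r N)%:E + eps%:E)%E).
    rewrite -EFinD lee_fin; lra.
  exact: leeD2r (LB N).
have muC : mu R (closure U) = r%:E.
  by apply/le_anti/andP; split => //; rewrite -muU; exact: mu_mono.
have densp : forall A, A `<=` U `|` [set p] -> density_is (R:=R) A p 0.
  move=> A AU.
  apply: (@squeeze_cvge _ _ _ _ (fun _ => 0%E) _
     (fun n => ((2%:R : R) ^+ L * (2%:R^-1) ^+ n)%:E)).
  - exists L => // n /= Ln.
    apply/andP; split.
      by apply: mule_ge0; [exact: mu_ge0 | rewrite lee_fin exprn_ge0].
    set J0 := (L + 1 + (n - L).*2)%N.
    have H : (mu R (A `&` cyl (Defs.prefix p n)) <= ((2%:R : R) ^- J0)%:E)%E.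
      apply: (@mu_UB R _ p (fun m => Some (c (J0 + m)%N))).
        move=> y [/AU [[j ej yj]|->] yn]; last by left.
        right; exists (j - J0)%N => //=.
        case: (leqP J0 j) => jJ; first by rewrite subnKC.
        exfalso; have := @near_p e L eL n j Ln ej jJ.
        by move/seteqP => [/(_ y (conj yj yn))].
      move=> N; rewrite (eq_bigr (fun m : 'I_N => (2%:R : R) ^- (m + J0).+1)).
        by rewrite geo_sum lerBlDr lerDl invr_ge0 exprn_ge0.
      move=> m _ /=; rewrite size_cc ?addnS ?(addnC J0) //.
      by apply/eqP; rewrite /J0; lia.
    apply: le_trans (lee_wpmul2r _ H) _; first by rewrite lee_fin exprn_ge0.
    by rewrite -EFinM lee_fin; exact: pow_ineq.
  - exact: cvg_cst.
  - apply: cvg_EFin; first exact: nearW.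
    rewrite -(mulr0 ((2%:R : R) ^+ L)); apply: cvgMr; apply: cvg_expr.
    by rewrite ger0_norm ?invr_ge0 // invf_lt1 // ltr1n.
have dual : forall A, U `<=` A -> A `<=` U `|` [set p] -> dualistic R A.
  move=> A UA AU z.
  case: (pselect (U z)) => [[j ej zj]|nUz].
    exists 1; split; first by right.
    by apply: (dens_one zj) => y yj; apply: UA; exists j.
  case: (pselect (z = p)) => [->|zp].
    by exists 0; split; [left | exact: densp].
  have [n0 H] := sep z nUz zp.
  exists 0; split; first by left.
  apply: (@dens_zero R A z n0) => k nk; apply/seteqP; split => y // [Ay yk].
  have : (cyl (Defs.prefix z k) `&` (U `|` [set p])) y by split => //; exact: AU.
  by rewrite H.
exists U; split => //.
  by apply: dual => // y Uy; left.
exact: dual.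
Qed.
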